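(* For every $n\ge 1$, the symmetric group $S_n$ has a mixing sequence consisting of involutions of length at most $\frac{3}{2}\lfloor\log_2(n!)\rfloor+\frac{1}{2}n$; in particular $\mathrm{mixlen}(S_n)\le \frac{3}{2}\lfloor\log_2(n!)\rfloor+\frac{1}{2}n$.
   Context: For a finite group $G$, a random subproduct is a random element $g_1^{\epsilon_1}\cdots g_k^{\epsilon_k}$ where $g_1,\dots,g_k\in G$ are fixed and $\epsilon_1,\dots,\epsilon_k$ are independent Bernoulli random variables with $\epsilon_i\sim\mathrm{Ber}(p_i)$, $p_i\in[0,1]$. If such a random subproduct is distributed exactly uniformly on $G$, then $(g_1,p_1),\dots,(g_k,p_k)$ is a mixing sequence of $G$ of length $k$, and $G$ is mixable. The mixing length $\mathrm{mixlen}(G)$ is the minimal length of a mixing sequence of $G$. *)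

(* Defs.v *)
From mathcomp Require Import all_boot all_order all_algebra all_fingroup.
From mathcomp Require Import Rstruct.
From Stdlib Require Import Reals.
Set Implicit Arguments. Unset Strict Implicit. Unset Printing Implicit Defensive.
Import GRing.Theory Num.Theory.
Local Open Scope ring_scope.

Definition subprod (gT : finGroupType) (s : seq (gT * R))
  (e : {ffun 'I_(size s) -> bool}) : gT :=
  (\prod_(i < size s) (if e i then (nth (1%g, 0) s i).1 else 1%g))%g.

Definition outcome_prob (gT : finGroupType) (s : seq (gT * R))
  (e : {ffun 'I_(size s) -> bool}) : R :=
  \prod_(i < size s) (if e i then (nth (1%g, 0) s i).2 else 1 - (nth (1%g, 0) s i).2).

Definition subprod_prob (gT : finGroupType) (s : seq (gT * R)) (g : gT) : R :=
  \sum_(e : {ffun 'I_(size s) -> bool} | @subprod gT s e == g) @outcome_prob gT s e.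

Definition mixing_seq (gT : finGroupType) (s : seq (gT * R)) : Prop :=
  (forall x, x \in s -> 0 <= x.2 <= 1) /\
  (forall g : gT, subprod_prob s g = 1 / (#|[set: gT]|)%:R).

(* Main.v *)
Require Import Defs.
From mathcomp Require Import all_boot all_order all_algebra all_fingroup.
From mathcomp Require Import Rstruct.
From Stdlib Require Import Reals.
From mathcomp Require Import cyclic.
From mathcomp Require Import zify ring lra.
Set Implicit Arguments. Unset Strict Implicit. Unset Printing Implicit Defensive.
Import GRing.Theory Num.Theory.
Local Open Scope ring_scope.


Definition delta (x : nat) : nat -> R := fun z => (z == x)%:R.

Fixpoint push (W : seq ((nat -> nat) * R)) (mu : nat -> R) : nat -> R :=
  match W with
  | [::] => mu
  | (f, p) :: W' => push W' (fun y => (1 - p) * mu y + p * mu (f y))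
  end.

Lemma eq_push W mu nu : mu =1 nu -> push W mu =1 push W nu.
Proof.
elim: W mu nu => [|[f p] W IH] mu nu H //=.
apply: IH => y; by rewrite !H.
Qed.

Lemma push_lin W a b mu nu y :
  push W (fun z => a * mu z + b * nu z) y = a * push W mu y + b * push W nu y.
Proof.
elim: W mu nu y => [|[f p] W IH] mu nu y //=.
rewrite -IH; apply: eq_push => z; ring.
Qed.

Lemma push_scale W a mu y : push W (fun z => a * mu z) y = a * push W mu y.
Proof.
have := push_lin W a 0 mu mu y; rewrite mul0r addr0 => <-.
by apply: eq_push => z; rewrite mul0r addr0.
Qed.

Lemma push0 W y : push W (fun _ => 0) y = 0.
Proof.
elim: W y => [|[f p] W IH] y //=.
rewrite -[RHS](IH y); apply: eq_push => z; ring.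
Qed.

Lemma push_cat A B mu : push (A ++ B) mu = push B (push A mu).
Proof. by elim: A mu => [|[f p] A IH] mu //=. Qed.

Definition good (M : nat) (fp : (nat -> nat) * R) :=
  [/\ forall x : nat, fp.1 (fp.1 x) = x, forall x : nat, (M <= x)%nat -> fp.1 x = x,
      (exists x : nat, (x < M)%nat /\ fp.1 x <> x) & 0 <= fp.2 <= 1].

Lemma push_fix (W : seq ((nat -> nat) * R)) (x : nat) :
  (forall fp, List.In fp W -> (forall z, fp.1 (fp.1 z) = z) /\ fp.1 x = x) ->
  push W (delta x) =1 delta x.
Proof.
elim: W => [|[f p] W IH] H y //=.
rewrite (eq_push _ (nu := delta x)) ?IH //.
  by move=> fp Hfp; apply: H; right.
move=> z; have [/= H1 H2] := H (f, p) (or_introl erefl).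
rewrite /delta /=.
have -> : (f z == x) = (z == x).
  apply/eqP/eqP => [E|->] /=; [by rewrite -(H1 z) E H2 | by []].
ring.
Qed.

Definition liftf (f : nat -> nat) (x : nat) : nat := (odd x + (f x./2).*2)%nat.
Definition liftW (W : seq ((nat -> nat) * R)) := [seq (liftf fp.1, fp.2) | fp <- W].

Lemma push_lift W mu y :
  push (liftW W) mu y = push W (fun z => mu (odd y + z.*2)%nat) y./2.
Proof.
elim: W mu y => [|[f p] W IH] mu y /=.
  by rewrite odd_double_half.
rewrite IH; apply: eq_push => z.
by rewrite /liftf oddD odd_double /= addbF oddb half_bit_double.
Qed.


Definition Tm (M x : nat) : nat :=
  if x == M.-1 then M.-2 else if x == M.-2 then M.-1 else x.
Definition Fm (M x : nat) : nat :=
  if (x < (M./2).*2)%nat then (if odd x then x.-1 else x.+1) else x.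

Fixpoint Wf (fuel M : nat) : seq ((nat -> nat) * R) :=
  match fuel with
  | 0 => [::]
  | fu.+1 =>
    if (M <= 1)%nat then [::] else
    (if odd M then [:: (Tm M, (M.-1)%:R / M%:R)] else [::]) ++
      liftW (Wf fu M./2) ++ [:: (Fm M, 2%:R^-1)]
  end.

Lemma good_Tm M : (3 <= M)%nat -> good M (Tm M, (M.-1)%:R / M%:R).
Proof.
move=> HM; split => /=.
- move=> x; rewrite /Tm.
  case: (eqVneq x M.-1) => [->|H1].
    have -> : (M.-2 == M.-1) = false by apply/eqP; lia.
    by rewrite eqxx.
  case: (eqVneq x M.-2) => [->|H2]; first by rewrite eqxx.
  by rewrite (negbTE H1) (negbTE H2).
- move=> x Hx; rewrite /Tm.
  have -> : (x == M.-1) = false by apply/eqP; lia.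
  by have -> : (x == M.-2) = false by apply/eqP; lia.
- exists M.-1; split; first lia.
  rewrite /Tm eqxx; lia.
- apply/andP; split.
    by apply: divr_ge0; rewrite ler0n.
  rewrite ler_pdivrMr ?ltr0n; last lia.
  by rewrite mul1r ler_nat; lia.
Qed.

Lemma good_Fm M : (2 <= M)%nat -> good M (Fm M, 2%:R^-1).
Proof.
move=> HM; split => /=.
- move=> x; rewrite /Fm; case: (ltnP x (M./2).*2) => H1; last by have -> : (x < (M./2).*2)%nat = false by lia.
  case: (boolP (odd x)) => H2.
    have -> : (x.-1 < (M./2).*2)%nat by lia.
    have -> : odd x.-1 = false by lia.
    lia.
  have -> : (x.+1 < (M./2).*2)%nat by lia.
  have -> : odd x.+1 = true by lia.
  by [].
- move=> x Hx; rewrite /Fm.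
  by have -> : (x < (M./2).*2)%nat = false by lia.
- exists 0%nat; split; first lia.
  rewrite /Fm.
  have -> : (0 < (M./2).*2)%nat by lia.
  by [].
- apply/andP; split; first by rewrite invr_ge0 ler0n.
  rewrite invf_le1 ?ltr0n // ler1n //.
Qed.

Lemma good_lift M fp : good M./2 fp -> good M (liftf fp.1, fp.2).
Proof.
case: fp => f p [/= H1 H2 [x0 [Hx0 Hfx0]] H4]; split => //=.
- move=> x; rewrite /liftf oddD odd_double addbF oddb half_bit_double H1.
  by rewrite odd_double_half.
- move=> x Hx; rewrite /liftf H2 ?odd_double_half //; lia.
- exists (x0.*2); split; first lia.
  rewrite /liftf odd_double doubleK /=; move=> E; apply: Hfx0.
  by apply: double_inj; rewrite -E.
Qed.

Lemma good_Wf fu M fp : List.In fp (Wf fu M) -> good M fp.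
Proof.
elim: fu M fp => [|fu IH] M fp //=.
case: ifP => // HM.
rewrite !List.in_app_iff => [[|[|]]].
- case: ifP => // Ho [] // <-; apply: good_Tm; lia.
- rewrite /liftW => /List.in_map_iff [fp' [<- Hin]].
  by apply: good_lift; apply: IH.
- case=> // <-; apply: good_Fm; lia.
Qed.


Lemma push_lift_bh W mu (b : bool) h :
  push (liftW W) mu (b + h.*2)%nat = push W (fun z => mu (b + z.*2)%nat) h.
Proof. by rewrite push_lift oddD odd_double addbF oddb half_bit_double. Qed.

Lemma Tm_eq M x : (2 <= M)%nat -> (Tm M x == M.-1) = (x == M.-2).
Proof.
move=> HM; rewrite /Tm.
case: (x =P M.-1) => [E|H1]; first by subst x; apply/eqP/eqP; lia.
case: (x =P M.-2) => [E|H2]; first by subst x; rewrite eqxx.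
by apply/eqP/eqP; lia.
Qed.

Lemma Fm_lt M (b : bool) h : (h < M./2)%nat -> Fm M (b + h.*2)%nat = (~~ b + h.*2)%nat.
Proof.
move=> H; rewrite /Fm.
have -> : (b + h.*2 < (M./2).*2)%nat by case: b; lia.
rewrite oddD odd_double addbF oddb.
by case: b => /=; lia.
Qed.

Lemma Fm_ge M (b : bool) h : (M./2 <= h)%nat -> Fm M (b + h.*2)%nat = (b + h.*2)%nat.
Proof.
move=> H; rewrite /Fm.
by have -> : (b + h.*2 < (M./2).*2)%nat = false by case: b; lia.
Qed.

Lemma uniform_Wf fu M : (1 <= M <= fu)%nat ->
  forall y, push (Wf fu M) (delta M.-1) y = (y < M)%:R / M%:R.
Proof.
elim: fu M => [|fu IH] M HM y; first lia.
rewrite /=; case: ifP => HM1.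
  have -> : M = 1%nat by lia.
  by rewrite /= /delta divr1 ltnS leqn0.
set k := M./2.
have Hk : (1 <= k <= fu)%nat by rewrite /k; lia.
have IHk := IH k Hk.
have Gk := @good_Wf fu k.
have Fix : push (Wf fu k) (delta k) =1 delta k.
  apply: push_fix => fp Hfp; have [H1 H2 _ _] := Gk fp Hfp; split => //.
  exact: H2.
have Hk0 : k%:R != 0 :> R by rewrite pnatr_eq0; lia.
rewrite !push_cat.
rewrite -(odd_double_half y); move: (odd y) (y./2) => b h.
case: ifP => Hodd.
- set q := (M.-1)%:R / M%:R.
  have Hnu : forall (b : bool) h,
      push (liftW (Wf fu k)) (push [:: (Tm M, q)] (delta M.-1)) (b + h.*2)%nat =
      if b then q * ((h < k)%:R / k%:R) else (1 - q) * (h == k)%:R.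
    move=> b' h'; rewrite push_lift_bh; case: b'.
      rewrite (eq_push _ (nu := fun z => q * delta k.-1 z)) ?push_scale ?IHk //.
      move=> z /=; rewrite /delta Tm_eq; last lia.
      have -> : ((1 + z.*2)%nat == M.-1) = false by apply/eqP; rewrite /k in Hk *; lia.
      have -> : ((1 + z.*2)%nat == M.-2) = (z == k.-1) by apply/eqP/eqP; rewrite /k in Hk *; lia.
      by rewrite /= mulr0n mulr0 add0r.
    rewrite (eq_push _ (nu := fun z => (1 - q) * delta k z)) ?push_scale ?Fix //.
    move=> z /=; rewrite /delta Tm_eq; last lia.
    have -> : ((0 + z.*2)%nat == M.-1) = (z == k) by apply/eqP/eqP; rewrite /k in Hk *; lia.
    have -> : ((0 + z.*2)%nat == M.-2) = false by apply/eqP; rewrite /k in Hk *; lia.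
    by rewrite /= mulr0n mulr0 addr0.
  have EM : M = (k.*2).+1 by rewrite /k; lia.
  have Hq : q = (k.*2)%:R / (k.*2).+1%:R by rewrite /q EM.
  have Hkp : 0 < k%:R :> R by rewrite ltr0n; lia.
  have E1 : (k.*2.+1)%:R = 2 * k%:R + 1 :> R by rewrite -natr1 -muln2 natrM mulrC.
  have E2 : (k.*2)%:R = 2 * k%:R :> R by rewrite -muln2 natrM mulrC.
  rewrite /=.
  case: (ltnP h k) => Hh.
  + rewrite Fm_lt // !Hnu Hh.
    have -> : (h == k) = false by lia.
    have -> : (b + h.*2 < M)%nat by case: b; lia.
    rewrite Hq EM E1 E2.
    case: b => /=; rewrite ?mulr1n ?mulr0n; field;
      rewrite ?Hk0 ?andbT; apply/eqP; lra.
  + rewrite Fm_ge // Hnu.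
    have -> : (h < k)%nat = false by lia.
    rewrite Hq EM E1 E2.
    case: b => /=.
      have -> : (1 + h.*2 < k.*2.+1)%nat = false by lia.
      rewrite ?mulr1n ?mulr0n; field; rewrite ?Hk0 ?andbT; apply/eqP; lra.
    case: (eqVneq h k) => [->|Hne].
      have -> : (0 + k.*2 < k.*2.+1)%nat by lia.
      rewrite ?mulr1n ?mulr0n; field; rewrite ?Hk0 ?andbT; apply/eqP; lra.
    have -> : (0 + h.*2 < k.*2.+1)%nat = false by lia.
    rewrite ?mulr1n ?mulr0n; field; apply/eqP; lra.
- have EM : M = k.*2 by rewrite /k; lia.
  have Hnu : forall (b : bool) h,
      push (liftW (Wf fu k)) (delta M.-1) (b + h.*2)%nat =
      if b then (h < k)%:R / k%:R else 0.
    move=> b' h'; rewrite push_lift_bh; case: b'.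
      rewrite (eq_push _ (nu := delta k.-1)) ?IHk //.
      move=> z /=; rewrite /delta.
      have -> : ((1 + z.*2)%nat == M.-1) = (z == k.-1) by apply/eqP/eqP; rewrite /k in Hk *; lia.
      by [].
    rewrite (eq_push _ (nu := fun _ => 0)) ?push0 //.
    move=> z /=; rewrite /delta.
    by have -> : ((0 + z.*2)%nat == M.-1) = false by apply/eqP; rewrite /k in Hk *; lia.
  have Hkp : 0 < k%:R :> R by rewrite ltr0n; lia.
  have E2 : (k.*2)%:R = 2 * k%:R :> R by rewrite -muln2 natrM mulrC.
  rewrite /=.
  case: (ltnP h k) => Hh.
  + rewrite Fm_lt // !Hnu Hh.
    have -> : (b + h.*2 < M)%nat by case: b; lia.
    rewrite EM E2.
    case: b => /=; rewrite ?mulr1n ?mulr0n; field; apply/eqP; lra.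
  + rewrite Fm_ge // Hnu.
    have -> : (h < k)%nat = false by lia.
    have -> : (b + h.*2 < M)%nat = false by case: b; lia.
    by case: b => /=; rewrite ?mulr1n ?mulr0n ?mul0r ?mulr0 ?addr0.
Qed.


Definition fcons k (b : bool) (f : {ffun 'I_k -> bool}) : {ffun 'I_k.+1 -> bool} :=
  [ffun i => if unlift ord0 i is Some j then f j else b].

Lemma fcons0 k b (f : {ffun 'I_k -> bool}) : fcons b f ord0 = b.
Proof. by rewrite ffunE unlift_none. Qed.

Lemma fconsS k b (f : {ffun 'I_k -> bool}) i : fcons b f (lift ord0 i) = f i.
Proof. by rewrite ffunE liftK. Qed.

Lemma sum_ffunS k (F : {ffun 'I_k.+1 -> bool} -> R) :
  \sum_(e : {ffun 'I_k.+1 -> bool}) F e =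
  \sum_(b : bool) \sum_(f : {ffun 'I_k -> bool}) F (fcons b f).
Proof.
rewrite pair_big /=.
rewrite (reindex (fun p : bool * {ffun 'I_k -> bool} => fcons p.1 p.2)) //=.
apply: onW_bij.
exists (fun e : {ffun 'I_k.+1 -> bool} => (e ord0, [ffun j => e (lift ord0 j)])).
  move=> [b f] /=; rewrite fcons0; congr pair; apply/ffunP => j.
  by rewrite ffunE fconsS.
move=> e; apply/ffunP => i; rewrite ffunE /=.
by case: unliftP => [j ->|->]; rewrite ?ffunE.
Qed.

Section Prob.
Variable gT : finGroupType.

Lemma subprod_prob_nil (g : gT) : subprod_prob [::] g = (g == 1%g)%:R.
Proof.
rewrite /subprod_prob.
have E : forall e : {ffun 'I_0 -> bool}, e = [ffun i => false].
  by move=> e; apply/ffunP => -[].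
case: (eqVneq g 1%g) => [->|Hg].
  rewrite (big_pred1 [ffun i => false]) /=.
    by rewrite /outcome_prob big_ord0.
  move=> e /=; rewrite /subprod big_ord0 eqxx; apply/esym/eqP; exact: E.
rewrite big_pred0 // => e; rewrite /subprod big_ord0 eq_sym; exact: negbTE.
Qed.

Lemma subprod_prob_cons (a : gT) p s g :
  subprod_prob ((a, p) :: s) g =
  (1 - p) * subprod_prob s g + p * subprod_prob s (a^-1 * g)%g.
Proof.
rewrite /subprod_prob.
rewrite (big_mkcond (fun e => _ == g)) /= sum_ffunS big_bool /=.
rewrite !(big_mkcond (fun e => _ == _)) !big_distrr /= addrC.
congr (_ + _); apply: eq_bigr => f _.
  have -> : @subprod _ ((a, p) :: s) (fcons false f) = @subprod _ s f.
    by rewrite /subprod big_ord_recl fcons0 mul1g; apply: eq_bigr => i _; rewrite fconsS lift0.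
  have -> : @outcome_prob _ ((a, p) :: s) (fcons false f) = (1 - p) * @outcome_prob _ s f.
    by rewrite /outcome_prob big_ord_recl fcons0; congr (_ * _); apply: eq_bigr => i _; rewrite fconsS lift0.
  by case: ifP; rewrite ?mulr0.
have -> : @subprod _ ((a, p) :: s) (fcons true f) = (a * @subprod _ s f)%g.
  by rewrite /subprod big_ord_recl fcons0; congr (_ * _)%g; apply: eq_bigr => i _; rewrite fconsS lift0.
have -> : @outcome_prob _ ((a, p) :: s) (fcons true f) = p * @outcome_prob _ s f.
  by rewrite /outcome_prob big_ord_recl fcons0; congr (_ * _); apply: eq_bigr => i _; rewrite fconsS lift0.
have -> : ((a * @subprod _ s f)%g == g) = (@subprod _ s f == (a^-1 * g)%g).
  apply/eqP/eqP => [<-|->]; by rewrite ?mulKg ?mulKVg.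
by case: ifP; rewrite ?mulr0.
Qed.

End Prob.


Section Prob2.
Variable gT : finGroupType.

Lemma subprod_prob_cat (s1 s2 : seq (gT * R)) g :
  subprod_prob (s1 ++ s2) g =
  \sum_h subprod_prob s1 h * subprod_prob s2 (h^-1 * g)%g.
Proof.
elim: s1 g => [|[a p] s1 IH] g /=.
  rewrite (bigD1 1%g) //= big1 => [|h Hh]; last by rewrite subprod_prob_nil (negbTE Hh) mul0r.
  by rewrite subprod_prob_nil eqxx mul1r invg1 mul1g addr0.
rewrite subprod_prob_cons !IH.
under [RHS]eq_bigr do rewrite subprod_prob_cons mulrDl -!mulrA.
rewrite big_split /= -!big_distrr /=; congr (_ + _ * _).
rewrite [RHS](reindex_inj (mulgI a)) /=.
by apply: eq_bigr => h _; rewrite mulKg invMg mulgA.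
Qed.

Lemma subprod_prob_sum (s : seq (gT * R)) : \sum_g subprod_prob s g = 1.
Proof.
elim: s => [|[a p] s IH].
  rewrite (bigD1 1%g) //= big1 => [|h Hh]; last by rewrite subprod_prob_nil (negbTE Hh).
  by rewrite subprod_prob_nil eqxx addr0.
under eq_bigr do rewrite subprod_prob_cons.
rewrite big_split /= -!big_distrr /= IH.
rewrite (reindex_inj (mulgI a)) /=.
under eq_bigr do rewrite mulKg.
by rewrite IH !mulr1 subrK.
Qed.

Lemma subprod_prob_supp (P : gT -> bool) (s : seq (gT * R)) g :
  P 1%g -> (forall x y, P x -> P y -> P (x * y)%g) ->
  (forall x, List.In x s -> P x.1) -> ~~ P g -> subprod_prob s g = 0.
Proof.
move=> P1 PM.
elim: s g => [|[a p] s IH] g Hs Hg.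
  rewrite subprod_prob_nil; case: eqP => // E; move: Hg; by rewrite E P1.
have Ha : P a by apply: (Hs (a, p)); left.
have Hs' : forall x, List.In x s -> P x.1 by move=> x Hx; apply: Hs; right.
rewrite subprod_prob_cons !IH ?mulr0 ?addr0 //.
apply/negP => H; move/negP: Hg; apply.
by have := PM _ _ Ha H; rewrite mulKVg.
Qed.

End Prob2.


Definition gfun n (f : nat -> nat) (x : 'I_n) : 'I_n := insubd x (f x).

Definition gfun' n (f : nat -> nat) (x : 'I_n) : 'I_n :=
  if [forall z : 'I_n, gfun f (gfun f z) == z] then gfun f x else x.

Lemma gfun'_inj n f : injective (@gfun' n f).
Proof.
move=> x y; rewrite /gfun'; case: ifP => [/forallP H|_] // E.
by rewrite -(eqP (H x)) E (eqP (H y)).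
Qed.

Definition mkinv n (f : nat -> nat) : 'S_n := perm (@gfun'_inj n f).

Definition invol n (f : nat -> nat) :=
  (forall z, f (f z) = z) /\ (forall z, (z < n)%nat -> (f z < n)%nat).

Lemma mkinvE n f (x : 'I_n) : invol n f -> val (mkinv n f x) = f x.
Proof.
move=> [H1 H2]; rewrite /mkinv permE /gfun'.
have -> : [forall z : 'I_n, gfun f (gfun f z) == z].
  apply/forallP => z; apply/eqP/val_inj.
  by rewrite /gfun !val_insubd !H2 // H1.
by rewrite /gfun val_insubd H2.
Qed.

Definition liftS n (W : seq ((nat -> nat) * R)) : seq ('S_n * R) :=
  [seq (mkinv n fp.1, fp.2) | fp <- W].

Lemma pp_push n (W : seq ((nat -> nat) * R)) :
  (forall fp, List.In fp W -> invol n fp.1) ->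
  forall x y : 'I_n,
  \sum_k subprod_prob (liftS n W) k * (k x == y)%:R = push W (delta x) y.
Proof.
elim: W => [|[f p] W IH] HW x y /=.
  rewrite (bigD1 1%g) //= big1 => [|h Hh]; last by rewrite subprod_prob_nil (negbTE Hh) mul0r.
  by rewrite subprod_prob_nil eqxx mul1r perm1 addr0 /delta eq_sym.
have Hf : invol n f by apply: (HW (f, p)); left.
have HW' : forall fp, List.In fp W -> invol n fp.1 by move=> fp H; apply: HW; right.
under eq_bigr do rewrite subprod_prob_cons mulrDl -!mulrA.
rewrite big_split /= -!big_distrr /= IH //.
rewrite (reindex_inj (mulgI (mkinv n f))) /=.
under eq_bigr do rewrite mulKg permM.
have Hx : (f x < n)%nat by case: Hf => _ ->.
have -> : mkinv n f x = Ordinal Hx by apply/val_inj; rewrite /= mkinvE.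
rewrite IH //=.
rewrite -push_lin; apply: eq_push => z.
rewrite /delta /=.
have -> : (f z == x) = (z == f x).
  by case: Hf => H1 _; apply/eqP/eqP => [<-|->]; rewrite H1.
by [].
Qed.

Lemma mkinv_order2 n f : invol n f -> (exists x, (x < n)%nat /\ f x <> x) ->
  #[mkinv n f]%g = 2%nat.
Proof.
move=> Hf [x [Hx Hfx]].
have H1 : (mkinv n f * mkinv n f = 1)%g.
  apply/permP => z; apply/val_inj; rewrite permM perm1 !mkinvE //.
  by case: Hf.
have H2 : mkinv n f != 1%g.
  apply/eqP => E; apply: Hfx.
  by have := mkinvE (Ordinal Hx) Hf; rewrite E perm1 /= => <-.
apply/eqP; rewrite eqn_leq; apply/andP; split.
  by apply: order_inf; rewrite expgS expg1 H1.
by rewrite order_gt1.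
Qed.

Close Scope ring_scope.

Definition W M := Wf M M.
Definition L M := size (W M).

Lemma Wf_fuel fu1 fu2 M : M <= fu1 -> M <= fu2 -> Wf fu1 M = Wf fu2 M.
Proof.
elim: fu1 fu2 M => [|fu1 IH] [|fu2] M H1 H2 //=.
- have -> : M = 0 by lia. by [].
- have -> : M = 0 by lia. by [].
case: ifP => // HM.
rewrite (IH fu2) //; lia.
Qed.

Lemma size_Wf fu M : 1 < M -> size (Wf fu.+1 M) = odd M + size (Wf fu M./2) + 1.
Proof.
move=> H; rewrite /=; have -> : (M <= 1) = false by lia.
by rewrite !size_cat /liftW size_map; case: (odd M) => /=; lia.
Qed.

Lemma L_even j : 0 < j -> L j.*2 = (L j).+1.
Proof.
move=> Hj; rewrite /L /W.
have E : j.*2 = (j.*2.-1).+1 by lia.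
rewrite {1}E size_Wf; last lia.
rewrite odd_double doubleK (@Wf_fuel _ j j); lia.
Qed.

Lemma L_odd j : 0 < j -> L j.*2.+1 = (L j).+2.
Proof.
move=> Hj; rewrite /L /W size_Wf; last lia.
have -> : (j.*2.+1)./2 = j by lia.
rewrite (@Wf_fuel _ j j) /=; try lia.
Qed.

Lemma L1 : L 1 = 0. Proof. by []. Qed.

Definition tl n := trunc_log 2 n.

Lemma tl_even j : 0 < j -> tl j.*2 = (tl j).+1.
Proof. by move=> Hj; rewrite /tl trunc_log2_double. Qed.

Lemma tl_odd j : 0 < j -> tl j.*2.+1 = (tl j).+1.
Proof.
move=> Hj; rewrite /tl trunc_log2S; last lia.
by have -> : (j.*2.+1)./2 = j by lia.
Qed.

Lemma pair_sum (f : nat -> nat) t :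
  \sum_(1 <= M < (t.*2.+1).+1) f M = f 1 + \sum_(1 <= j < t.+1) (f j.*2 + f j.*2.+1).
Proof.
elim: t => [|t IH]; first by rewrite big_nat1 big_geq // addn0.
rewrite big_nat_recr //= [in RHS]big_nat_recr //=.
have -> : t.+1.*2 = (t.*2.+1).+1 by lia.
rewrite big_nat_recr //= IH; lia.
Qed.

Definition BB n := \sum_(1 <= M < n.+1) (L M).*2.
Definition CC n := \sum_(1 <= M < n.+1) (3 * tl M + 1).

Lemma BB_odd t : BB t.*2.+1 = (BB t).*2 + 6 * t.
Proof.
elim: t => [|t IH]; first by rewrite /BB big_nat1 L1 big_geq.
rewrite /BB in IH *.
have E1 := L_even (ltn0Sn t); have E2 := L_odd (ltn0Sn t).
rewrite doubleS in E1 E2.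
rewrite doubleS big_nat_recr // big_nat_recr // IH [in RHS]big_nat_recr //= E1 E2.
lia.
Qed.

Lemma CC_odd t : CC t.*2.+1 = 1 + (CC t).*2 + 6 * t.
Proof.
elim: t => [|t IH]; first by rewrite /CC big_nat1 /tl trunc_log1 big_geq.
rewrite /CC in IH *.
have E1 := tl_even (ltn0Sn t); have E2 := tl_odd (ltn0Sn t).
rewrite doubleS in E1 E2.
rewrite doubleS big_nat_recr // big_nat_recr // IH [in RHS]big_nat_recr //= E1 E2.
lia.
Qed.

Lemma BB_S n : BB n.+1 = BB n + (L n.+1).*2.
Proof. by rewrite /BB big_nat_recr. Qed.

Lemma CC_S n : CC n.+1 = CC n + (3 * tl n.+1 + 1).
Proof. by rewrite /CC big_nat_recr. Qed.

Lemma BB_le_CC n : BB n <= CC n.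
Proof.
elim/ltn_ind: n => n IH.
case: n IH => [|n] IH; first by rewrite /BB /CC !big_geq.
set t := (n.+1)./2.
case: (boolP (odd n.+1)) => Ho.
  have E : n.+1 = t.*2.+1 by rewrite /t; lia.
  have Hlt : t < n.+1 by rewrite /t; lia.
  rewrite E BB_odd CC_odd; have := IH t Hlt; lia.
have Ht : 0 < t by rewrite /t; lia.
have Ht1 : t < n.+1 by rewrite /t; lia.
have Ht2 : t.-1 < n.+1 by rewrite /t; lia.
have H1 := IH _ Ht1; have H2 := IH _ Ht2.
have Et : t = t.-1.+1 by lia.
have B1 := BB_odd t; have C1 := CC_odd t.
have B2 := BB_S t.*2; have C2 := CC_S t.*2.
have B3 := BB_S t.-1; have C3 := CC_S t.-1.
rewrite -Et in B3 C3.
have L2 := L_odd Ht; have T2 := tl_odd Ht.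
have E : n.+1 = t.*2 by rewrite /t; lia.
rewrite E; lia.
Qed.

Definition TS n := \sum_(1 <= M < n.+1) tl M.

Lemma CC_TS n : CC n = 3 * TS n + n.
Proof.
elim: n => [|n IH]; first by rewrite /CC /TS !big_geq.
rewrite CC_S /TS big_nat_recr //= -/(TS n) IH; lia.
Qed.

Lemma TS_fact n : expn 2 (TS n) <= n`!.
Proof.
elim: n => [|n IH]; first by rewrite /TS big_geq.
rewrite /TS big_nat_recr //= -/(TS n) expnD factS mulnC.
apply: leq_mul => //.
exact: trunc_logP.
Qed.

Lemma count_bound n : BB n <= 3 * trunc_log 2 n`! + n.
Proof.
apply: (leq_trans (BB_le_CC n)); rewrite CC_TS.
have : TS n <= trunc_log 2 n`! by apply: trunc_log_max => //; exact: TS_fact.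
lia.
Qed.

Local Open Scope ring_scope.

Definition inH n m (g : 'S_n) := [forall i : 'I_n, (m <= i)%nat ==> (g i == i)].

Lemma inH1 n m : inH m (1%g : 'S_n).
Proof. by apply/forallP => i; rewrite perm1 eqxx implybT. Qed.

Lemma inHM n m (x y : 'S_n) : inH m x -> inH m y -> inH m (x * y)%g.
Proof.
move=> /forallP Hx /forallP Hy; apply/forallP => i; apply/implyP => Hi.
by rewrite permM (eqP (implyP (Hx i) Hi)) (implyP (Hy i) Hi).
Qed.

Lemma inH_fix n m (g : 'S_n) (i : 'I_n) : inH m g -> (m <= i)%nat -> g i = i.
Proof. by move=> /forallP H Hi; apply/eqP; apply: (implyP (H i)). Qed.

Lemma inH_lt n m (g : 'S_n) (i : 'I_n) : inH m g -> (i < m)%nat -> (g i < m)%nat.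
Proof.
move=> H Hi; rewrite ltnNge; apply/negP => Hg.
have E := inH_fix H Hg; move/perm_inj: E => E.
by move: Hi; rewrite -E ltnNge Hg.
Qed.

Lemma inH_step n m (k g : 'S_n) (mo : 'I_n) : val mo = m -> inH m.+1 k ->
  inH m (g * k^-1)%g = inH m.+1 g && (k mo == g mo).
Proof.
move=> Hmo Hk.
have Hki : forall i : 'I_n, (m.+1 <= i)%nat -> k^-1%g i = i.
  by move=> i Hi; rewrite -{1}(inH_fix Hk Hi) permK.
apply/forallP/andP => [H|[/forallP H1 /eqP H2] i].
  have H' : forall i : 'I_n, (m <= i)%nat -> g i = k i.
    move=> i Hi; have := implyP (H i) Hi; rewrite permM => /eqP E.
    by rewrite -{2}E permKV.
  split.
    apply/forallP => i; apply/implyP => Hi.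
    by rewrite H' ?(inH_fix Hk Hi) //; apply: ltnW.
  by rewrite H' ?Hmo.
apply/implyP => Hi; rewrite permM.
case: (eqVneq i mo) => [->|Hne].
  by rewrite -H2 permK.
have Hi' : (m.+1 <= i)%nat.
  have : (i : nat) != m.
    by rewrite -Hmo; apply: contra Hne => /eqP E; apply/eqP/val_inj.
  move: Hi; lia.
by rewrite (eqP (implyP (H1 i) Hi')) Hki.
Qed.

Lemma good_invol n M fp : (M <= n)%nat -> good M fp -> invol n fp.1.
Proof.
move=> HM [H1 H2 _ _]; split => // z Hz.
case: (ltnP z M) => Hz'.
  suff : (fp.1 z < M)%nat by move: HM; lia.
  rewrite ltnNge; apply/negP => Hf.
  have := H2 _ Hf; rewrite H1 => E.
  by move: Hz'; rewrite E ltnNge Hf.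
by rewrite H2.
Qed.

Definition V n M := liftS n (W M).

Fixpoint Sq n m : seq ('S_n * R) :=
  match m with
  | 0 => [::]
  | m'.+1 => Sq n m' ++ V n m'.+1
  end.

Lemma V_props n M : (M <= n)%nat -> forall x, List.In x (V n M) ->
  [/\ inH M x.1, #[x.1]%g = 2%nat & 0 <= x.2 <= 1].
Proof.
move=> HM x; rewrite /V /liftS => /List.in_map_iff [fp [<- Hin]].
have Gd := good_Wf Hin.
have Iv := good_invol HM Gd.
case: Gd => H1 H2 [x0 [Hx0 Hfx0]] H4; split => //=.
- apply/forallP => i; apply/implyP => Hi; apply/eqP/val_inj.
  by rewrite mkinvE // H2.
- apply: mkinv_order2 => //; exists x0; split => //; lia.
Qed.

Lemma inH0 n (g : 'S_n) : inH 0 g = (g == 1%g).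
Proof.
apply/idP/eqP => [/forallP H|->]; last exact: inH1.
by apply/permP => i; rewrite perm1; apply/eqP; exact: (H i).
Qed.

Lemma level n m : (m < n)%nat ->
  (exists c, forall g, subprod_prob (Sq n m) g = if inH m g then c else 0) ->
  exists c, forall g, subprod_prob (Sq n m.+1) g = if inH m.+1 g then c else 0.
Proof.
move=> Hm [c Hc]; exists (c / m.+1%:R) => g.
set mo : 'I_n := Ordinal Hm.
have HV := V_props (Hm : (m.+1 <= n)%nat).
rewrite /= subprod_prob_cat.
rewrite (reindex (fun k => g * k^-1)%g) /=; last first.
  apply: onW_bij; exists (fun h => h^-1 * g)%g => k.
    by rewrite invMg invgK mulgKV.
  by rewrite invMg invgK mulKVg.
have E : forall k : 'S_n,
    subprod_prob (Sq n m) (g * k^-1)%g * subprod_prob (V n m.+1) ((g * k^-1)^-1 * g)%g =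
    (if inH m.+1 g then c else 0) * (subprod_prob (V n m.+1) k * (k mo == g mo)%:R).
  move=> k; rewrite invMg invgK mulgKV Hc.
  case Hk: (inH m.+1 k).
    rewrite (inH_step g (mo := mo)) //.
    case: (inH m.+1 g) => /=; last by rewrite !mul0r.
    by case: (k mo == g mo); rewrite /= ?mulr1 ?mulr0 ?mul0r.
  rewrite (@subprod_prob_supp _ (@inH n m.+1)) ?Hk ?mulr0 ?mul0r //.
  - by rewrite mulr0.
  - exact: inH1.
  - by move=> x y; apply: inHM.
  - by move=> x Hx; case: (HV x Hx).
under eq_bigr do rewrite E.
rewrite -big_distrr /=.
rewrite (pp_push (n := n)); last first.
  move=> fp Hfp; apply: (@good_invol n m.+1) => //; exact: good_Wf Hfp.
rewrite /W uniform_Wf; last lia.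
case Hg: (inH m.+1 g); last by rewrite mul0r.
by rewrite (inH_lt Hg) //= mul1r.
Qed.


Lemma memIn (T : eqType) (x : T) s : x \in s -> List.In x s.
Proof.
elim: s => //= y s IH; rewrite inE => /orP [/eqP ->|/IH]; [left|right] => //.
Qed.

Lemma Sq_mem n m x : (m <= n)%nat -> x \in Sq n m ->
  exists M, (M <= n)%nat /\ List.In x (V n M).
Proof.
elim: m => [|m IH] Hm //=.
rewrite mem_cat => /orP [/IH|Hx]; first by apply; lia.
by exists m.+1; split => //; apply: memIn.
Qed.

Lemma size_Sq n m : (size (Sq n m)).*2 = BB m.
Proof.
elim: m => [|m IH]; first by rewrite /BB big_geq.
by rewrite /= size_cat doubleD IH BB_S /V /liftS size_map.
Qed.

Lemma levels n m : (m <= n)%nat ->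
  exists c, forall g, subprod_prob (Sq n m) g = if inH m g then c else 0.
Proof.
elim: m => [|m IH] Hm.
  exists 1 => g; rewrite /= subprod_prob_nil inH0.
  by case: (g == 1%g).
apply: level => //; apply: IH; lia.
Qed.

Lemma const_unif n (s : seq ('S_n * R)) c : (forall g, subprod_prob s g = c) ->
  forall g : 'S_n, subprod_prob s g = 1 / (#|[set: 'S_n]|)%:R.
Proof.
move=> Hc.
have Hsum := subprod_prob_sum s.
have E : \sum_(g : 'S_n) subprod_prob s g = \sum_(g : 'S_n) c.
  by apply: eq_bigr => g _; rewrite Hc.
rewrite E sumr_const -mulr_natr in Hsum.
have HN : #|'S_n|%:R != 0 :> R by rewrite pnatr_eq0 card_Sn -lt0n fact_gt0.
move=> g; rewrite Hc cardsT; apply: (mulIf HN).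
by rewrite Hsum mul1r mulVf.
Qed.

Close Scope ring_scope.

Theorem mainTheorem3 (n : nat) : (1 <= n)%N ->
  exists s : seq ('S_n * R),
    mixing_seq s /\ all (fun x => #[x.1]%g == 2%N) s /\
    (2 * size s <= 3 * trunc_log 2 n`! + n)%N.
Proof.
move=> Hn; exists (Sq n n); split; [split|split].
- move=> x Hx; have [M [HM Hin]] := Sq_mem (leqnn n) Hx.
  by case: (V_props HM Hin).
- have [c Hc] := levels (leqnn n).
  have Hall : forall g : 'S_n, inH n g.
    by move=> g; apply/forallP => i; rewrite leqNgt ltn_ord.
  by apply: (const_unif (c := c)) => g; rewrite Hc Hall.
- apply/allP => x Hx; have [M [HM Hin]] := Sq_mem (leqnn n) Hx.
  by case: (V_props HM Hin) => _ ->.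
- have := count_bound n; rewrite -(size_Sq n n); lia.
Qed.
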